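(* Let $k \ge 1$ be an integer, let $H$ be a graph, and let $x_1,\dots,x_k,y_1,\dots,y_k$ be $2k$ distinct vertices of $H$ such that $Z = \{x_1,\dots,x_k,y_1,\dots,y_k\}$ is an independent set of $H$. If $\tau(H) \ge 2k-1$, then $H$ contains a matching $\{m_1,\dots,m_k\}$ of size $k$ such that $m_i \cap \{x_j,y_j\} = \emptyset$ for all $i \neq j$.
   Context: All graphs are finite and simple. $\tau(H)$ denotes the vertex cover number of $H$ (minimum size of a vertex set meeting every edge of $H$). Edges are regarded as 2-element vertex sets. *)

(* Defs.v *)
(* A simple graph H on a finite vertex type T is a
   symmetric irreflexive relation e : rel T. *)
From mathcomp Require Import all_boot.
Set Implicit Arguments. Unset Strict Implicit. Unset Printing Implicit Defensive.

Definition vcover (T : finType) (e : rel T) (C : {set T}) : bool :=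
  [forall u, forall v, e u v ==> (u \in C) || (v \in C)].

(* tau(H): minimum size of a vertex cover (setT is always a cover,
   so #|T| is a valid default for the minimum). *)
Definition tau (T : finType) (e : rel T) : nat :=
  \big[minn/#|T|]_(C : {set T} | vcover e C) #|C|.

Definition independent (T : finType) (e : rel T) (Z : {set T}) : bool :=
  [forall u in Z, forall v in Z, ~~ e u v].

Definition is_edge (T : finType) (e : rel T) (m : {set T}) : Prop :=
  exists u v, e u v /\ m = [set u; v].

(* Main.v *)
Require Import Defs.
From mathcomp Require Import all_boot zify.
Set Implicit Arguments. Unset Strict Implicit. Unset Printing Implicit Defensive.

Definition Nb (A B : finType) (r : A -> B -> bool) (B0 : {set B}) (S : {set A}) : {set B} :=
  [set b in B0 | [exists a in S, r a b]].
Definition cst (A B : finType) (r : A -> B -> bool) (A0 : {set A}) (B0 : {set B}) (S : {set A}) :=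
  #|A0 :\: S| + #|Nb r B0 S|.

Ltac gen_cards := repeat match goal with |- context [ card ?A ] => let n := fresh "n" in generalize (card A); intro n end;
  repeat match goal with H : _ |- _ => clear H end.

Lemma cardU_le (T : finType) (A B : {set T}) : #|A :|: B| <= #|A| + #|B|.
Proof. exact: leq_card_setU. Qed.

Lemma konig_gen (A B : finType) (r : A -> B -> bool) (b0 : B) n :
  forall (A0 : {set A}) (B0 : {set B}), #|A0| + #|B0| < n -> exists (S D : {set A}) (g : A -> B),
   [/\ S \subset A0, D \subset A0, {in D &, injective g},
       forall a, a \in D -> (g a \in B0) && r a (g a) & cst r A0 B0 S <= #|D|].
Proof.
elim: n => [//|n IH] A0 B0 Hn.
case: (boolP [exists a, exists b, [&& a \in A0, b \in B0 & r a b]]); last first.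
  move=> /existsPn Hno; exists A0, set0, (fun _ => b0); split => //.
  - exact: sub0set.
  - by move=> a1 a2; rewrite inE.
  - by move=> a; rewrite inE.
  rewrite /cst setDv cards0 add0n leqn0 cards_eq0; apply/eqP/setP => b.
  rewrite !inE; apply/negP => /andP [Hb /existsP [a /andP [Ha Hr]]].
  by move: (Hno a) => /existsPn /(_ b); rewrite Ha Hb Hr.
case/existsP => a /existsP [b /and3P [Ha Hb Hr]].
case: (@arg_minnP _ A0 (fun S => S \subset A0) (cst r A0 B0) (subxx A0)) => S0 HS0 Hmin.
case: (boolP [exists S' : {set A}, [&& S' \subset A0 :\ a, b \in Nb r B0 S' &
                                    cst r A0 B0 S' <= cst r A0 B0 S0]]).
- case/existsP => S' /and3P [HS'a HbN HS'c].
  have HS'A : S' \subset A0 by apply: subset_trans HS'a (subD1set _ _).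
  set N' := Nb r B0 S'.
  have HN'B : N' \subset B0 by apply/subsetP => t; rewrite inE => /andP [].
  have HaS' : a \notin S' by apply/negP => /(subsetP HS'a); rewrite !inE eqxx.
  have lt1 : #|S'| < #|A0|.
    apply: proper_card; apply/properP; split => //; by exists a.
  have lt2 : #|B0 :\: N'| < #|B0|.
    apply: proper_card; apply/properP; split; first exact: subsetDl.
    by exists b => //; rewrite inE HbN.
  have [S1 [D1 [g1 [HS1 HD1 Hg1 Hg1m Hc1]]]] : exists (S D : {set A}) (g : A -> B),
   [/\ S \subset S', D \subset S', {in D &, injective g},
       forall a, a \in D -> (g a \in N') && r a (g a) & cst r S' N' S <= #|D|].
    apply: IH; move: lt1 lt2 Hn (subset_leq_card HN'B); gen_cards; lia.
  have [S2 [D2 [g2 [HS2 HD2 Hg2 Hg2m Hc2]]]] : exists (S D : {set A}) (g : A -> B),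
   [/\ S \subset A0 :\: S', D \subset A0 :\: S', {in D &, injective g},
       forall a, a \in D -> (g a \in B0 :\: N') && r a (g a) & cst r (A0 :\: S') (B0 :\: N') S <= #|D|].
    apply: IH; move: lt1 lt2 Hn (subset_leq_card (subsetDl A0 S')); gen_cards; lia.
  exists S', (D1 :|: D2), (fun a => if a \in D1 then g1 a else g2 a); split => //.
  + by rewrite subUset (subset_trans HD1 HS'A) (subset_trans HD2 (subsetDl _ _)).
  + move=> a1 a2; rewrite !inE.
    case H1: (a1 \in D1); case H2: (a2 \in D1) => /= Ha1 Ha2.
    * exact: Hg1.
    * move=> Heq; move: (Hg1m _ H1) (Hg2m _ Ha2); rewrite Heq.
      by move=> /andP [H _] /andP [H' _]; move: H'; rewrite in_setD H.
    * move=> Heq; move: (Hg2m _ Ha1) (Hg1m _ H2); rewrite Heq.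
      by move=> /andP [H' _] /andP [H _]; move: H'; rewrite in_setD H.
    * exact: Hg2.
  + move=> a1; rewrite inE; case H1: (a1 \in D1) => /= Ha1.
      by case/andP: (Hg1m _ H1) => /(subsetP HN'B) -> ->.
    by case/andP: (Hg2m _ Ha1); rewrite inE => /andP [_ ->] ->.
  + have Hdisj : [disjoint D1 & D2].
      rewrite -setI_eq0; apply/eqP/setP => t; rewrite !inE.
      apply/negP => /andP [/(subsetP HD1) H1 /(subsetP HD2)]; rewrite inE H1 /=.
      by [].
    have -> : #|D1 :|: D2| = #|D1| + #|D2|.
      by apply/eqP; rewrite (leq_card_setU D1 D2).
    have i1 : #|N'| <= #|D1|.
      have h1 := Hmin S1 (subset_trans HS1 HS'A).
      have h2 : #|A0 :\: S1| <= #|A0 :\: S'| + #|S' :\: S1|.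
        apply: leq_trans (cardU_le _ _); apply: subset_leq_card.
        apply/subsetP => t; rewrite !inE => /andP [-> ->]; by case: (t \in S').
      have h3 : #|Nb r B0 S1| <= #|Nb r N' S1|.
        apply: subset_leq_card; apply/subsetP => t; rewrite !inE.
        case/andP => Ht /existsP [a1 /andP [Ha1 Hr1]].
        rewrite Ht /=; apply/andP; split; apply/existsP; exists a1 => //.
          by rewrite (subsetP HS1).
        by rewrite Ha1.
      move: HS'c h1 h2 h3 Hc1; rewrite /cst -/N'; gen_cards; lia.
    have i2 : #|A0 :\: S'| <= #|D2|.
      have h1 := Hmin (S' :|: S2).
      have h0 : S' :|: S2 \subset A0 by rewrite subUset HS'A (subset_trans HS2 (subsetDl _ _)).
      have {h1} h1 := h1 h0.
      have h2 : #|A0 :\: (S' :|: S2)| <= #|(A0 :\: S') :\: S2|.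
        apply: subset_leq_card; apply/subsetP => t; rewrite !inE.
        by case: (t \in S'); case: (t \in S2).
      have h3 : #|Nb r B0 (S' :|: S2)| <= #|N'| + #|Nb r (B0 :\: N') S2|.
        apply: leq_trans (cardU_le _ _); apply: subset_leq_card.
        apply/subsetP => t; rewrite !inE.
        case/andP => Ht /existsP [a1 /andP [Ha1 Hr1]].
        rewrite Ht /=; case E: [exists a0 in S', r a0 t] => //=.
        apply/existsP; exists a1; rewrite Hr1 andbT.
        move: Ha1; rewrite inE; case/orP => // Ha1.
        by move: E => /negbT /existsPn /(_ a1); rewrite Ha1 Hr1.
      move: HS'c h1 h2 h3 Hc2; rewrite /cst -/N'; gen_cards; lia.
    move: i1 i2; rewrite /cst -/N'; gen_cards; lia.
- move/existsPn => Hno.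
  have lt : #|A0 :\ a| + #|B0 :\ b| < n.
    move: Hn; rewrite (cardsD1 a A0) (cardsD1 b B0) Ha Hb; gen_cards; lia.
  have [S' [D' [g' [HS' HD' Hg' Hg'm Hc']]]] := IH _ _ lt.
  exists S0, (a |: D'), (fun a' => if a' == a then b else g' a'); split => //.
  + by rewrite subUset sub1set Ha (subset_trans HD' (subD1set _ _)).
  + move=> a1 a2; rewrite !inE.
    case: (eqVneq a1 a) => [->|H1]; case: (eqVneq a2 a) => [->|H2] //= Ha1 Ha2.
    * move=> Hb2; move: (Hg'm _ Ha2); rewrite -Hb2 !inE eqxx //.
    * move=> Hb1; move: (Hg'm _ Ha1); rewrite Hb1 !inE eqxx //.
    * exact: Hg'.
  + move=> a1; rewrite !inE; case: (eqVneq a1 a) => [->|H1] /=; first by rewrite Hb Hr.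
    by move=> /Hg'm; rewrite !inE => /andP [/andP [_ ->] ->].
  + have HaD' : a \notin D' by apply/negP => /(subsetP HD'); rewrite !inE eqxx.
    rewrite cardsU1 HaD' /=.
    have HS'A : S' \subset A0 by apply: subset_trans HS' (subD1set _ _).
    have h1 := Hmin S' HS'A.
    have h2 : #|A0 :\: S'| <= 1 + #|(A0 :\ a) :\: S'|.
      rewrite -(cards1 a); apply: leq_trans (cardU_le _ _); apply: subset_leq_card.
      apply/subsetP => t; rewrite !inE; case: (eqVneq t a) => //.
    have h3 : #|Nb r B0 S'| <= (b \in Nb r B0 S') + #|Nb r (B0 :\ b) S'|.
      case Hbn: (b \in Nb r B0 S') => /=.
        rewrite -(cards1 b); apply: leq_trans (cardU_le _ _); apply: subset_leq_card.
        apply/subsetP => t; rewrite !inE; case: (eqVneq t b) => //.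
      apply: subset_leq_card; apply/subsetP => t; rewrite !inE.
      case: (eqVneq t b) => [->|//]; by move: Hbn; rewrite inE => ->.
    have h4 : (b \in Nb r B0 S') -> cst r A0 B0 S0 < cst r A0 B0 S'.
      move=> Hbn; move: (Hno S'); rewrite HS' Hbn /= ltnNge; by [].
    move: h1 h2 h3 h4 Hc'; rewrite /cst.
    case: (b \in Nb r B0 S') => /=; gen_cards; lia.
Qed.
Lemma ww_match (T : finType) (e : rel T) (e_irr : irreflexive e) (t0 : T) n :
 forall W : {set T}, #|W| < n -> exists su sv : seq T,
  [/\ size su = size sv, uniq (su ++ sv), {subset su ++ sv <= W},
      forall i, i < size su -> e (nth t0 su i) (nth t0 sv i) &
      forall u v, u \in W -> v \in W -> u \notin su ++ sv -> v \notin su ++ sv -> ~~ e u v].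
Proof.
elim: n => [//|n IH] W Hn.
case: (boolP [exists u, exists v, [&& u \in W, v \in W & e u v]]); last first.
  move=> /existsPn Hno; exists [::], [::]; split => // u v Hu Hv _ _.
  by move: (Hno u) => /existsPn /(_ v); rewrite Hu Hv.
case/existsP => u /existsP [v /and3P [Hu Hv Huv]].
have Hne : u != v by apply/negP => /eqP Heq; move: Huv; rewrite Heq e_irr.
have lt : #|W :\ u :\ v| < n.
  move: Hn; rewrite (cardsD1 u W) Hu (cardsD1 v (W :\ u)) !inE eq_sym Hne Hv /=.
  move: (#|_|) => m; lia.
have [su [sv [Hs Hun Hsub He Hmax]]] := IH _ lt.
have Hnot : forall t, t \in su ++ sv -> (t != u) && (t != v).
  by move=> t /Hsub; rewrite !inE => /and3P [-> -> _].
exists (u :: su), (v :: sv); split.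
- by rewrite /= Hs.
- have Hp : perm_eq (su ++ [:: v] ++ sv) ([:: v] ++ su ++ sv) by rewrite perm_catCA.
  rewrite cat_cons cons_uniq -cat1s (perm_uniq Hp) /= Hun andbT.
  have H1 : u \notin su ++ sv by apply/negP => /Hnot; rewrite eqxx.
  have H2 : v \notin su ++ sv by apply/negP => /Hnot; rewrite eqxx andbF.
  apply/andP; split; last exact: H2.
  move: H1; rewrite !mem_cat !inE !negb_or Hne /=; by case/andP => -> ->.
- move=> t; rewrite cat_cons inE mem_cat inE => /or3P [/eqP -> //|Ht|/orP [/eqP -> //|Ht]].
  + by have := Hsub t; rewrite mem_cat Ht !inE => /(_ isT) /and3P [].
  + by have := Hsub t; rewrite mem_cat Ht orbT !inE => /(_ isT) /and3P [].
- by case=> [|i] //= /He.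
- have key : forall t, t \in W -> t \notin (u :: su) ++ (v :: sv) ->
      (t \in W :\ u :\ v) && (t \notin su ++ sv).
    move=> t Ht; rewrite !mem_cat !inE Ht; apply/implyP.
    by case: (t == u); case: (t == v); case: (t \in su); case: (t \in sv).
  move=> u' v' Hu' Hv' /(key _ Hu') /andP [H1 H2] /(key _ Hv') /andP [H3 H4].
  exact: Hmax.
Qed.

Lemma bigmin_le (I : eqType) (s : seq I) (F : I -> nat) m0 j :
  j \in s -> \big[minn/m0]_(i <- s) F i <= F j.
Proof.
elim: s => [//|a s IH]; rewrite inE big_cons => /orP [/eqP ->|Hj].
  exact: geq_minl.
exact: leq_trans (geq_minr _ _) (IH Hj).
Qed.

Lemma tau_le (T : finType) (e : rel T) C : vcover e C -> tau e <= #|C|.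
Proof.
move=> HC; rewrite /tau -big_filter; apply: bigmin_le.
by rewrite mem_filter HC mem_index_enum.
Qed.

Lemma inter0 (T : finType) (a b c d : T) :
  a != c -> a != d -> b != c -> b != d -> [set a; b] :&: [set c; d] = set0.
Proof.
move=> H1 H2 H3 H4; apply/setP => t; rewrite !inE.
case: (eqVneq t a) => [->|_]; first by rewrite (negbTE H1) (negbTE H2).
case: (eqVneq t b) => [->|_]; first by rewrite (negbTE H3) (negbTE H4).
by [].
Qed.

Lemma disj4 (T : finType) (a b c d : T) :
  a != c -> a != d -> b != c -> b != d -> [disjoint [set a; b] & [set c; d]].
Proof. by move=> *; rewrite -setI_eq0 inter0. Qed.
Theorem mainTheorem14 (T : finType) (e : rel T)
    (e_sym : symmetric e) (e_irr : irreflexive e)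
    (k : nat) (hk : 1 <= k) (x y : 'I_k -> T)
    (x_inj : injective x) (y_inj : injective y)
    (xy_dist : forall i j, x i != y j)
    (Z_indep : independent e ([set x i | i : 'I_k] :|: [set y i | i : 'I_k]))
    (htau : 2 * k - 1 <= tau e) :
  exists m : 'I_k -> {set T},
    (forall i, is_edge e (m i)) /\
    (forall i j, i != j -> [disjoint m i & m j]) /\
    (forall i j, i != j -> m i :&: [set x j; y j] = set0).
Proof.
pose i0 : 'I_k := Ordinal hk.
set Z := [set x i | i : 'I_k] :|: [set y i | i : 'I_k] in Z_indep.
have xZ : forall a, x a \in Z by move=> a; rewrite /Z inE; apply/orP; left; exact: imset_f.
have yZ : forall a, y a \in Z by move=> a; rewrite /Z inE; apply/orP; right; exact: imset_f.
have neqZ : forall a b, a \in Z -> b \notin Z -> a != b.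
  by move=> a b Ha Hb; apply/eqP => E; by rewrite -E Ha in Hb.
have [su [sv [Hs Hun Hsub He Hmax]]] :=
  @ww_match T e e_irr (x i0) (#|~: Z|).+1 (~: Z) (ltnSn _).
pose B0 := [set t in ~: Z | t \notin su ++ sv].
pose r := fun a b => e (x a) b || e (y a) b.
have [S [D [g [_ _ Hginj Hgm Hc]]]] :=
  @konig_gen 'I_k T r (x i0) (#|[set: 'I_k]| + #|B0|).+1 setT B0 (ltnSn _).
pose C := [set t in su ++ sv] :|: ([set x a | a in ~: S] :|: [set y a | a in ~: S] :|: Nb r B0 S).
have HC : vcover e C.
  have key : forall u v, e u v -> u \in Z -> v \notin Z -> v \notin su ++ sv ->
      (u \in C) || (v \in C).
    move=> u v Huv uZ vZ vs.
    have vB : v \in B0 by rewrite inE in_setC vZ vs.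
    have Hcase : forall a, r a v -> (u = x a \/ u = y a) -> (u \in C) || (v \in C).
      move=> a Hr Hu; case Ha: (a \in S).
        apply/orP; right; rewrite /C !in_setU; apply/orP; right; apply/orP; right.
        rewrite inE vB /=; apply/existsP; exists a; by rewrite Ha Hr.
      apply/orP; left; rewrite /C !in_setU; apply/orP; right; apply/orP; left.
      case: Hu => ->; apply/orP; [left|right]; apply: imset_f; by rewrite inE Ha.
    move: uZ; rewrite /Z inE => /orP [] /imsetP [a _ Hu].
      by apply: (Hcase a); [rewrite /r -Hu Huv | left].
    by apply: (Hcase a); [rewrite /r -Hu Huv orbT | right].
  apply/forallP => u; apply/forallP => v; apply/implyP => Huv.
  case hu: (u \in su ++ sv).
    by rewrite /C !in_setU inE hu.
  case hv: (v \in su ++ sv).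
    by rewrite /C !in_setU [v \in _]inE hv orbT.
  case uZ: (u \in Z); case vZ: (v \in Z).
  - by move: Z_indep => /forallP /(_ u); rewrite uZ /= => /forallP /(_ v); rewrite vZ Huv.
  - by apply: key => //; rewrite ?hv ?vZ.
  - rewrite orbC; apply: key; rewrite ?hu ?uZ ?vZ //; by rewrite e_sym.
  - by move: (Hmax u v); rewrite !in_setC uZ vZ hu hv Huv => /(_ isT isT isT isT).
have Hcard : #|C| <= 2 * size su + 2 * #|D|.
  have h1 : #|[set t in su ++ sv]| <= 2 * size su.
    rewrite cardsE; apply: leq_trans (card_size _) _; rewrite size_cat Hs; lia.
  have h2 : #|[set x a | a in ~: S]| <= #|~: S| := leq_imset_card _ _.
  have h3 : #|[set y a | a in ~: S]| <= #|~: S| := leq_imset_card _ _.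
  have h4 : #|~: S| + #|Nb r B0 S| <= #|D| by move: Hc; rewrite /cst setTD.
  rewrite /C; apply: leq_trans (cardU_le _ _) _.
  apply: leq_trans (leq_add (leqnn _) (cardU_le _ _)) _.
  apply: leq_trans (leq_add (leqnn _) (leq_add (cardU_le _ _) (leqnn _))) _.
  move: h1 h2 h3 h4; gen_cards; lia.
have Hk : k <= size su + #|D|.
  move: (leq_trans htau (leq_trans (tau_le HC) Hcard)); gen_cards; lia.
pose rk (i : 'I_k) := #|[set j : 'I_k | (j < i) && (j \notin D)]|.
have rk_lt : forall i, i \notin D -> rk i < size su.
  move=> i Hi.
  have h1 : rk i < #|~: D|.
    apply: proper_card; apply/properP; split.
      by apply/subsetP => j; rewrite !inE => /andP [].
    by exists i; rewrite !inE ?ltnn.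
  have h2 := cardsC D; rewrite card_ord in h2.
  move: h1 h2 Hk; gen_cards; lia.
have rk_mono : forall i j : 'I_k, i \notin D -> j \notin D -> i < j -> rk i < rk j.
  move=> i j Hi Hj Hij; apply: proper_card; apply/properP; split.
    apply/subsetP => t; rewrite !inE => /andP [Ht ->]; rewrite andbT.
    exact: ltn_trans Ht Hij.
  by exists i; rewrite !inE ?ltnn ?Hij ?Hi.
have rk_inj : forall i j : 'I_k, i \notin D -> j \notin D -> i != j -> rk i != rk j.
  move=> i j Hi Hj Hij; case: (ltngtP i j) => H.
  - by rewrite neq_ltn rk_mono.
  - by rewrite neq_ltn (rk_mono j i) ?orbT.
  - by move: Hij; rewrite (val_inj H) eqxx.
pose t0 := x i0.
have Hnth : forall p q, p < size su -> q < size su -> p != q ->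
    [&& nth t0 su p != nth t0 su q, nth t0 su p != nth t0 sv q,
        nth t0 sv p != nth t0 su q & nth t0 sv p != nth t0 sv q].
  move=> p q Hp Hq Hpq.
  have Hsz : size (su ++ sv) = size su + size su by rewrite size_cat Hs.
  have Eu : forall p, p < size su -> nth t0 su p = nth t0 (su ++ sv) p.
    by move=> p' Hp'; rewrite nth_cat Hp'.
  have Ev : forall p, p < size su -> nth t0 sv p = nth t0 (su ++ sv) (size su + p).
    by move=> p' Hp'; rewrite nth_cat ltnNge leq_addr /= addKn.
  rewrite (Eu p) // (Eu q) // (Ev p) // (Ev q) // !nth_uniq // ?Hsz; lia.
have Hin : forall p, p < size su -> (nth t0 su p \in su ++ sv) && (nth t0 sv p \in su ++ sv).
  by move=> p Hp; rewrite !mem_cat !mem_nth ?orbT // -Hs.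
have HnZ : forall p, p < size su -> (nth t0 su p \notin Z) && (nth t0 sv p \notin Z).
  move=> p Hp; case/andP: (Hin p Hp) => /Hsub H1 /Hsub H2.
  by rewrite -!in_setC H1 H2.
have HgB : forall i, i \in D -> (g i \notin Z) && (g i \notin su ++ sv).
  move=> i Hi; case/andP: (Hgm i Hi); rewrite /B0 !inE => /andP [-> ->] _ //.
pose pe i := if e (x i) (g i) then x i else y i.
have peZ : forall i, pe i \in Z by move=> i; rewrite /pe; case: ifP.
have pe_neq : forall i j, i != j -> (pe i != pe j) && (pe i != x j) && (pe i != y j).
  move=> i j Hij; rewrite /pe.
  have Hx : x i != x j by apply: contra Hij => /eqP /x_inj ->.
  have Hy : y i != y j by apply: contra Hij => /eqP /y_inj ->.
  have Hxy := xy_dist i j; have Hyx : y i != x j by rewrite eq_sym xy_dist.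
  by case: ifP; case: ifP; rewrite ?Hx ?Hy ?Hxy ?Hyx ?Hxy.
have Hnin : forall a b (s : seq T), a \in s -> b \notin s -> a != b.
  by move=> a b s Ha Hb; apply/eqP => E; by rewrite -E Ha in Hb.
pose m i := if i \in D then [set pe i; g i]
            else [set nth t0 su (rk i); nth t0 sv (rk i)].
exists m; split; [|split].
- move=> i; rewrite /m; case: ifP => Hi.
    exists (pe i), (g i); split => //; rewrite /pe.
    by case/andP: (Hgm i Hi) => _; rewrite /r; case: ifP => // _ /= ->.
  exists (nth t0 su (rk i)), (nth t0 sv (rk i)); split => //.
  by apply: He; apply: rk_lt; rewrite Hi.
- move=> i j Hij; rewrite /m.
  case Hi: (i \in D); case Hj: (j \in D).
  + case/andP: (HgB i Hi) => gi1 gi2; case/andP: (HgB j Hj) => gj1 gj2.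
    case/andP: (pe_neq i j Hij) => /andP [H1 _] _.
    apply: disj4 => //; first exact: neqZ (peZ i) gj1.
      by rewrite eq_sym; apply: neqZ (peZ j) gi1.
    by apply: contra Hij => /eqP /Hginj; rewrite Hi Hj => /(_ isT isT) ->.
  + have Hr : rk j < size su by apply: rk_lt; rewrite Hj.
    case/andP: (HgB i Hi) => gi1 gi2; case/andP: (HnZ _ Hr) => n1 n2.
    case/andP: (Hin _ Hr) => m1 m2.
    apply: disj4; [exact: neqZ (peZ i) n1|exact: neqZ (peZ i) n2|
      rewrite eq_sym; exact: Hnin m1 gi2|rewrite eq_sym; exact: Hnin m2 gi2].
  + have Hr : rk i < size su by apply: rk_lt; rewrite Hi.
    case/andP: (HgB j Hj) => gj1 gj2; case/andP: (HnZ _ Hr) => n1 n2.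
    case/andP: (Hin _ Hr) => m1 m2.
    apply: disj4; [rewrite eq_sym; exact: neqZ (peZ j) n1|exact: Hnin m1 gj2|
      rewrite eq_sym; exact: neqZ (peZ j) n2|exact: Hnin m2 gj2].
  + have Hri : rk i < size su by apply: rk_lt; rewrite Hi.
    have Hrj : rk j < size su by apply: rk_lt; rewrite Hj.
    have := Hnth _ _ Hri Hrj (rk_inj i j (negbT Hi) (negbT Hj) Hij).
    by case/and4P => *; apply: disj4.
- move=> i j Hij; rewrite /m; case Hi: (i \in D).
    case/andP: (HgB i Hi) => gi1 gi2; case/andP: (pe_neq i j Hij) => /andP [_ H1] H2.
    by apply: inter0 => //; rewrite eq_sym; apply: neqZ gi1; rewrite ?xZ ?yZ.
  have Hr : rk i < size su by apply: rk_lt; rewrite Hi.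
  case/andP: (HnZ _ Hr) => n1 n2.
  by apply: inter0; rewrite eq_sym; [exact: neqZ (xZ j) n1|exact: neqZ (yZ j) n1|exact: neqZ (xZ j) n2|exact: neqZ (yZ j) n2].
Qed.
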